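(* Let $(X,d)$ be a compact metric space and $f_{1,\infty}=\{f_n\}_{n\ge1}$ a commutative sequence of continuous self-maps of $X$. The following are equivalent: (1) $(X,f_{1,\infty})$ is weakly mixing; (2) $(\mathcal{M}(X),\widetilde{f}_{1,\infty})$ is weakly mixing; (3) $(\mathcal{M}(X),\widetilde{f}_{1,\infty})$ is topologically transitive.
   Context: The family is commutative if $f_i\circ f_j=f_j\circ f_i$ for all $i,j$. Write $f_1^n=f_n\circ\cdots\circ f_1$. $\mathcal{M}(X)$ is the space of Borel probability measures on $X$ with the weak$^*$ topology, and $\widetilde{f}_1^n(\mu)(A)=\mu((f_1^n)^{-1}(A))$ for Borel $A$. A non-autonomous system $(Y,g_{1,\infty})$ is topologically transitive if for all non-empty open $U,V$ there is $n\in\mathbb{N}$ with $g_1^n(U)\cap V\ne\emptyset$, and weakly mixing if for all non-empty open $U_1,U_2,V_1,V_2$ there is $n\in\mathbb{N}$ with $g_1^n(U_i)\cap V_i\ne\emptyset$ for $i=1,2$. *)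

(* Defs.v *)
From Stdlib Require Import Reals Lra Lia List.
Open Scope R_scope.

Section MetricDefs.
Variable X : Type.
Variable d : X -> X -> R.

Definition is_metric : Prop :=
  (forall x y, 0 <= d x y) /\
  (forall x y, d x y = 0 <-> x = y) /\
  (forall x y, d x y = d y x) /\
  (forall x y z, d x z <= d x y + d y z).

Definition mopen (U : X -> Prop) : Prop :=
  forall x, U x -> exists eps, 0 < eps /\ forall y, d x y < eps -> U y.

Definition mcompact : Prop :=
  forall (I : Type) (U : I -> X -> Prop),
    (forall i, mopen (U i)) -> (forall x, exists i, U i x) ->
    exists l : list I, forall x, exists i, In i l /\ U i x.

Definition mcontinuous (f : X -> X) : Prop :=
  forall x eps, 0 < eps -> exists delta, 0 < delta /\
    forall y, d x y < delta -> d (f x) (f y) < eps.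

Definition rcontinuous (g : X -> R) : Prop :=
  forall x eps, 0 < eps -> exists delta, 0 < delta /\
    forall y, d x y < delta -> Rabs (g x - g y) < eps.

Inductive borel : (X -> Prop) -> Prop :=
| borel_open : forall U, mopen U -> borel U
| borel_compl : forall A, borel A -> borel (fun x => ~ A x)
| borel_union : forall A : nat -> X -> Prop,
    (forall n, borel (A n)) -> borel (fun x => exists n, A n x).

(** Borel probability measures (a set function; its values on non-Borel
    sets are irrelevant) *)
Definition is_prob (mu : (X -> Prop) -> R) : Prop :=
  (forall A, borel A -> 0 <= mu A) /\
  mu (fun _ => True) = 1 /\
  (forall A : nat -> X -> Prop,
     (forall n, borel (A n)) ->
     (forall m n x, m <> n -> A m x -> A n x -> False) ->
     infinite_sum (fun n => mu (A n)) (mu (fun x => exists n, A n x))).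

Fixpoint finsum (n : nat) (h : nat -> R) : R :=
  match n with O => 0 | S k => finsum k h + h k end.

Definition lower_sum (mu : (X -> Prop) -> R) (g : X -> R) (r : R) : Prop :=
  exists (n : nat) (a : nat -> R) (A : nat -> X -> Prop),
    (forall i, (i < n)%nat -> borel (A i)) /\
    (forall i j x, (i < n)%nat -> (j < n)%nat -> i <> j -> A i x -> A j x -> False) /\
    (forall x, exists i, (i < n)%nat /\ A i x) /\
    (forall i x, (i < n)%nat -> A i x -> a i <= g x) /\
    r = finsum n (fun i => a i * mu (A i)).

(** I is the integral of the (bounded, Borel) function g against mu *)
Definition integral (mu : (X -> Prop) -> R) (g : X -> R) (I : R) : Prop :=
  is_lub (lower_sum mu g) I.

(** open sets of the weak* topology on M(X) *)
Definition weak_open (U : ((X -> Prop) -> R) -> Prop) : Prop :=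
  (forall mu, U mu -> is_prob mu) /\
  forall mu, U mu -> exists eps, 0 < eps /\
    exists (k : nat) (gs : nat -> X -> R),
      (forall i, (i < k)%nat -> rcontinuous (gs i)) /\
      forall nu, is_prob nu ->
        (forall i, (i < k)%nat -> forall Inu Imu,
            integral nu (gs i) Inu -> integral mu (gs i) Imu ->
            Rabs (Inu - Imu) < eps) ->
        U nu.

End MetricDefs.

Definition push {X : Type} (f : X -> X) (mu : (X -> Prop) -> R) : (X -> Prop) -> R :=
  fun A => mu (fun x => A (f x)).

(** non-autonomous compositions: g_1^n = g_n o ... o g_1 (g_0 unused) *)
Fixpoint comp {T : Type} (g : nat -> T -> T) (n : nat) : T -> T :=
  match n with
  | O => fun x => x
  | S k => fun x => g (S k) (comp g k x)
  end.

Definition top_transitive {T : Type} (isopen : (T -> Prop) -> Prop)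
  (g : nat -> T -> T) : Prop :=
  forall U V, isopen U -> isopen V -> (exists x, U x) -> (exists y, V y) ->
    exists n, (1 <= n)%nat /\ exists x, U x /\ V (comp g n x).

Definition weak_mixing {T : Type} (isopen : (T -> Prop) -> Prop)
  (g : nat -> T -> T) : Prop :=
  forall U1 U2 V1 V2, isopen U1 -> isopen U2 -> isopen V1 -> isopen V2 ->
    (exists x, U1 x) -> (exists x, U2 x) -> (exists y, V1 y) -> (exists y, V2 y) ->
    exists n, (1 <= n)%nat /\
      (exists x, U1 x /\ V1 (comp g n x)) /\
      (exists x, U2 x /\ V2 (comp g n x)).

(* Main.v *)
Require Import Defs.
From Stdlib Require Import Reals Lra Lia List ClassicalEpsilon Classical FunctionalExtensionality PropExtensionality.
Open Scope R_scope.

Lemma finsum_ext n h1 h2 : (forall i, (i < n)%nat -> h1 i = h2 i) -> finsum n h1 = finsum n h2.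
Proof. induction n; simpl; intros H; auto. rewrite IHn by (intros; apply H; lia). rewrite H by lia. auto. Qed.

Lemma finsum_plus n h1 h2 : finsum n (fun i => h1 i + h2 i) = finsum n h1 + finsum n h2.
Proof. induction n; simpl; [lra| rewrite IHn; lra]. Qed.

Lemma finsum_scal n c h : finsum n (fun i => c * h i) = c * finsum n h.
Proof. induction n; simpl; [lra| rewrite IHn; lra]. Qed.

Lemma finsum_minus n h1 h2 : finsum n (fun i => h1 i - h2 i) = finsum n h1 - finsum n h2.
Proof. induction n; simpl; [lra| rewrite IHn; lra]. Qed.

Lemma finsum_le n h1 h2 : (forall i, (i < n)%nat -> h1 i <= h2 i) -> finsum n h1 <= finsum n h2.
Proof. induction n; simpl; intros H; [lra|]. assert (h1 n <= h2 n) by (apply H; lia).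
  assert (finsum n h1 <= finsum n h2) by (apply IHn; intros; apply H; lia). lra. Qed.

Lemma finsum_zero n h : (forall i, (i < n)%nat -> h i = 0) -> finsum n h = 0.
Proof. intros H. rewrite (finsum_ext n h (fun _ => 0)) by auto. clear H. induction n; simpl; lra. Qed.

Lemma finsum_nonneg n h : (forall i, (i < n)%nat -> 0 <= h i) -> 0 <= finsum n h.
Proof. intros H. rewrite <- (finsum_zero n (fun _ => 0)) by auto. apply finsum_le; auto. Qed.

Lemma finsum_swap n m F : finsum n (fun i => finsum m (fun j => F i j)) = finsum m (fun j => finsum n (fun i => F i j)).
Proof. induction n; simpl. symmetry; apply finsum_zero; auto. rewrite IHn, <- finsum_plus. reflexivity. Qed.

Lemma finsum_add a b h : finsum (a+b) h = finsum a h + finsum b (fun i => h (a+i)%nat).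
Proof. induction b. rewrite Nat.add_0_r; simpl; lra. rewrite Nat.add_succ_r; simpl; rewrite IHb; lra. Qed.

Lemma finsum_prod N M F : (0 < M)%nat ->
  finsum (N*M) (fun k => F (k / M)%nat (k mod M)%nat) = finsum N (fun j => finsum M (fun l => F j l)).
Proof. intros HM. induction N. reflexivity.
  rewrite Nat.mul_succ_l, finsum_add, IHN. simpl. f_equal. apply finsum_ext. intros i Hi.
  rewrite <- (Nat.div_unique (N*M+i) M N i) by lia. rewrite <- (Nat.mod_unique (N*M+i) M N i) by lia. reflexivity. Qed.

Lemma finsum_abs n h : Rabs (finsum n h) <= finsum n (fun i => Rabs (h i)).
Proof. induction n; simpl. rewrite Rabs_R0; lra. eapply Rle_trans. apply Rabs_triang. lra. Qed.

Lemma sum_f_finsum s N : sum_f_R0 s N = finsum (S N) s.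
Proof. induction N; simpl. lra. rewrite IHN. simpl. lra. Qed.

Lemma Rabs_le_inv a b : Rabs a <= b -> -b <= a <= b.
Proof. unfold Rabs; destruct (Rcase_abs a); intros; lra. Qed.

Lemma Rabs_lt_inv a b : Rabs a < b -> -b < a < b.
Proof. unfold Rabs; destruct (Rcase_abs a); intros; lra. Qed.

Definition ind (P : Prop) : R := if excluded_middle_informative P then 1 else 0.

Lemma set_ext {X : Type} (A B : X -> Prop) : (forall x, A x <-> B x) -> A = B.
Proof. intros H. apply functional_extensionality. intros x. apply propositional_extensionality. auto. Qed.

Definition part {X : Type} (d : X -> X -> R) (n : nat) (A : nat -> X -> Prop) : Prop :=
  (forall i, (i < n)%nat -> borel X d (A i)) /\
  (forall i j x, (i < n)%nat -> (j < n)%nat -> i <> j -> A i x -> A j x -> False) /\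
  (forall x, exists i, (i < n)%nat /\ A i x).

Section B.
Context {X : Type} (d : X -> X -> R).
Implicit Types (mu : (X -> Prop) -> R).

Lemma borel_ext (A B : X -> Prop) : borel X d A -> (forall x, A x <-> B x) -> borel X d B.
Proof. intros H E. rewrite <- (set_ext A B E). auto. Qed.

Lemma borel_empty : borel X d (fun _ => False).
Proof. apply borel_open. intros x []. Qed.

Lemma borel_True : borel X d (fun _ => True).
Proof. apply borel_open. intros x _. exists 1. split; auto; lra. Qed.

Lemma borel_or (A B : X -> Prop) : borel X d A -> borel X d B -> borel X d (fun x => A x \/ B x).
Proof. intros HA HB. apply (borel_ext (fun x => exists n, (match n with O => A | _ => B end) x)).
  apply borel_union. intros [|n]; auto.
  intros x; split. intros [[|n] H]; auto. intros [H|H]. exists O; auto. exists 1%nat; auto. Qed.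

Lemma borel_and (A B : X -> Prop) : borel X d A -> borel X d B -> borel X d (fun x => A x /\ B x).
Proof. intros HA HB. apply (borel_ext (fun x => ~ (~ A x \/ ~ B x))).
  apply borel_compl. apply borel_or; apply borel_compl; auto.
  intros x; split. intros H. split; apply NNPP; intros H'; apply H; auto. intros [H1 H2] [H|H]; auto. Qed.

Lemma borel_preimage T (A : X -> Prop) : mcontinuous X d T -> borel X d A -> borel X d (fun x => A (T x)).
Proof. intros HT H. induction H.
  - apply borel_open. intros x Hx. destruct (H (T x) Hx) as [e [He H']].
    destruct (HT x e He) as [del [Hd H'']]. exists del. split; auto.
  - apply borel_compl. auto.
  - apply borel_union. auto.
Qed.

Lemma open_lt g b : rcontinuous X d g -> mopen X d (fun x => g x < b).
Proof. intros Hg x Hx. destruct (Hg x (b - g x)) as [del [Hd H]]. lra.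
  exists del. split; auto. intros y Hy. specialize (H y Hy). apply Rabs_def2 in H. lra. Qed.

Lemma open_gt g b : rcontinuous X d g -> mopen X d (fun x => b < g x).
Proof. intros Hg x Hx. destruct (Hg x (g x - b)) as [del [Hd H]]. lra.
  exists del. split; auto. intros y Hy. specialize (H y Hy). apply Rabs_def2 in H. lra. Qed.

Lemma prob_empty mu : is_prob X d mu -> mu (fun _ => False) = 0.
Proof. intros [_ [_ H]]. specialize (H (fun _ _ => False) (fun _ => borel_empty) (fun m n x _ h _ => h)).
  cbv beta in H. set (c := mu (fun _ => False)) in *.
  assert (E : (fun x : X => exists n : nat, False) = (fun _ => False)) by (apply set_ext; firstorder).
  rewrite E in H. fold c in H.
  destruct (Req_dec c 0) as [|Hc]; auto. exfalso.
  destruct (H (Rabs c / 2)) as [N HN]. apply Rabs_pos_lt in Hc. lra.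
  pose proof (HN N ltac:(lia)) as H1. pose proof (HN (S N) ltac:(lia)) as H2.
  unfold R_dist in *. simpl in H2. apply Rabs_pos_lt in Hc.
  assert (Rabs (sum_f_R0 (fun _ => c) N + c - c - (sum_f_R0 (fun _ => c) N - c)) <= Rabs (sum_f_R0 (fun _ => c) N + c - c) + Rabs (sum_f_R0 (fun _ => c) N - c)).
  { unfold Rminus at 1. rewrite <- (Rabs_Ropp (sum_f_R0 (fun _ => c) N - c)). apply Rabs_triang. }
  replace (sum_f_R0 (fun _ => c) N + c - c - (sum_f_R0 (fun _ => c) N - c)) with c in H0 by ring. lra.
Qed.

Lemma prob_ext mu (A B : X -> Prop) : (forall x, A x <-> B x) -> mu A = mu B.
Proof. intros E. rewrite (set_ext A B E). auto. Qed.

Lemma prob_nonneg mu (A : X -> Prop) : is_prob X d mu -> borel X d A -> 0 <= mu A.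
Proof. intros [H _] HA. auto. Qed.

Lemma fadd mu m C : is_prob X d mu -> (forall j, (j < m)%nat -> borel X d (C j)) ->
  (forall i j x, (i < m)%nat -> (j < m)%nat -> i <> j -> C i x -> C j x -> False) ->
  mu (fun x => exists j, (j < m)%nat /\ C j x) = finsum m (fun j => mu (C j)).
Proof. intros Hp HB HD. pose proof Hp as [_ [_ H]].
  specialize (H (fun n x => (n < m)%nat /\ C n x)).
  assert (Hb : forall n, borel X d (fun x => (n < m)%nat /\ C n x)).
  { intros n. destruct (Nat.lt_ge_cases n m).
    - apply (borel_ext (C n)); auto. firstorder.
    - apply (borel_ext (fun _ => False)). apply borel_empty. intuition lia. }
  specialize (H Hb). assert (H2 : infinite_sum (fun n => mu (fun x => (n < m)%nat /\ C n x)) (finsum m (fun j => mu (C j)))).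
  { intros e He. exists m. intros N HN. rewrite sum_f_finsum. replace (S N) with (m + (S N - m))%nat by lia.
    rewrite finsum_add. rewrite (finsum_zero (S N - m)). rewrite Rplus_0_r.
    rewrite (finsum_ext m _ (fun j => mu (C j))). unfold R_dist. rewrite Rminus_diag, Rabs_R0. auto.
    intros i Hi. apply prob_ext. firstorder.
    intros i Hi. rewrite <- (prob_empty mu Hp). apply prob_ext. intuition lia. }
  refine (uniqueness_sum _ _ _ (H _) H2).
  intros a b x Hab [Ha Hxa] [Hb' Hxb]. eapply HD; eauto.
Qed.

Lemma decomp mu m B (A : X -> Prop) : is_prob X d mu -> part d m B -> borel X d A ->
  mu A = finsum m (fun j => mu (fun x => A x /\ B j x)).
Proof. intros Hp [HB [HD HC]] HA. rewrite <- fadd; auto.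
  apply prob_ext. intros x; split. intros Hx. destruct (HC x) as [j [Hj Hx']]. eauto. firstorder.
  intros; apply borel_and; auto. intros i j x Hi Hj Hij [_ H1] [_ H2]. eauto. Qed.

Lemma mu_total mu m B : is_prob X d mu -> part d m B -> finsum m (fun j => mu (B j)) = 1.
Proof. intros Hp HB. pose proof Hp as [_ [H1 _]]. rewrite <- H1. rewrite (decomp mu m B (fun _ => True)); auto.
  apply finsum_ext. intros. apply prob_ext. firstorder. apply borel_True. Qed.

Lemma Cmp mu n A a m B b : is_prob X d mu -> part d n A -> part d m B ->
  (forall i j x, (i < n)%nat -> (j < m)%nat -> A i x -> B j x -> a i <= b j) ->
  finsum n (fun i => a i * mu (A i)) <= finsum m (fun j => b j * mu (B j)).
Proof. intros Hp HA HB H.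
  rewrite (finsum_ext n _ (fun i => finsum m (fun j => a i * mu (fun x => A i x /\ B j x)))).
  rewrite (finsum_ext m (fun j => b j * mu (B j)) (fun j => finsum n (fun i => b j * mu (fun x => A i x /\ B j x)))).
  rewrite finsum_swap. apply finsum_le. intros j Hj. apply finsum_le. intros i Hi.
  destruct (classic (exists x, A i x /\ B j x)) as [[x [H1 H2]]|Hn].
  apply Rmult_le_compat_r. apply prob_nonneg; auto. apply borel_and. apply HA; auto. apply HB; auto. eauto.
  rewrite (prob_ext mu _ (fun _ => False)), prob_empty; auto. lra. firstorder.
  intros j Hj. rewrite (decomp mu n A (B j)); auto. rewrite <- finsum_scal. apply finsum_ext. intros. f_equal. f_equal.
  apply set_ext. firstorder. apply HB; auto.
  intros i Hi. rewrite (decomp mu m B (A i)); auto. rewrite <- finsum_scal. auto. apply HA; auto.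
Qed.

End B.

Lemma lub_unique (E : R -> Prop) a b : is_lub E a -> is_lub E b -> a = b.
Proof. intros [H1 H2] [H3 H4]. apply Rle_antisym; auto. Qed.

Section I.
Context {X : Type} (d : X -> X -> R).
Implicit Types (mu : (X -> Prop) -> R).

Lemma part1 : part d 1 (fun _ _ => True).
Proof. split; [|split]. intros; apply borel_True. intros; lia. intros x; exists O; split; auto. Qed.

Lemma lower_le mu g M : is_prob X d mu -> (forall x, g x <= M) ->
  forall r, lower_sum X d mu g r -> r <= M.
Proof. intros Hp HM r [n [a [A [H1 [H2 [H3 [H4 ->]]]]]]].
  assert (Hpa : part d n A) by (split; auto).
  eapply Rle_trans. apply (Cmp d mu n A a 1 (fun _ _ => True) (fun _ => M)); auto. apply part1.
  intros i j x Hi Hj Ha _. eapply Rle_trans. apply (H4 i x); auto. auto.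
  simpl. pose proof Hp as [_ [E _]]. rewrite E. lra. Qed.

Lemma integral_exists mu g M : is_prob X d mu -> (forall x, Rabs (g x) <= M) ->
  exists I, integral X d mu g I.
Proof. intros Hp HM. destruct (completeness (lower_sum X d mu g)) as [I HI].
  exists M. intros r Hr. apply (lower_le mu g M); auto. intros x. specialize (HM x). apply Rabs_le_inv in HM. lra.
  exists (finsum 1 (fun i => (-M) * mu ((fun _ _ => True) i))). exists 1%nat, (fun _ => -M), (fun _ _ => True).
  destruct part1 as [A1 [A2 A3]]. repeat split; auto. intros i x _ _. specialize (HM x). apply Rabs_le_inv in HM. lra.
  exists I. auto. Qed.

Lemma Core mu g N A c eta : is_prob X d mu -> part d N A ->
  (forall j y, (j < N)%nat -> A j y -> Rabs (g y - c j) <= eta) ->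
  forall I, integral X d mu g I -> Rabs (I - finsum N (fun j => c j * mu (A j))) <= eta.
Proof. intros Hp HA Hc I [HI1 HI2].
  pose proof (mu_total d mu N A Hp HA) as Tot.
  assert (L : finsum N (fun j => (c j - eta) * mu (A j)) <= I).
  { apply HI1. exists N, (fun j => c j - eta), A. destruct HA as [A1 [A2 A3]]. repeat split; auto.
    intros i x Hi Hx. specialize (Hc i x Hi Hx). apply Rabs_le_inv in Hc. lra. }
  assert (U : I <= finsum N (fun j => (c j + eta) * mu (A j))).
  { apply HI2. intros r [n [a [B [H1 [H2 [H3 [H4 ->]]]]]]]. apply (Cmp d); auto. split; auto.
    intros i j x Hi Hj Hb Ha. specialize (Hc j x Hj Ha). specialize (H4 i x Hi Hb). apply Rabs_le_inv in Hc. lra. }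
  rewrite (finsum_ext N _ (fun j => c j * mu (A j) - eta * mu (A j))) in L by (intros; ring).
  rewrite (finsum_ext N _ (fun j => c j * mu (A j) + eta * mu (A j))) in U by (intros; ring).
  rewrite finsum_minus, finsum_scal, Tot in L. rewrite finsum_plus, finsum_scal, Tot in U.
  apply Rabs_le. lra. Qed.

Lemma part_pre T m B : mcontinuous X d T -> part d m B -> part d m (fun j x => B j (T x)).
Proof. intros HT [H1 [H2 H3]]. split; [|split]. intros; apply borel_preimage; auto. eauto. intros x; apply H3. Qed.

Lemma sum_le1 mu T g h I1 I2 : is_prob X d mu -> mcontinuous X d T ->
  (forall x, g x + h (T x) <= 1) -> integral X d mu g I1 ->
  integral X d (fun A => mu (fun x => A (T x))) h I2 -> I1 + I2 <= 1.
Proof. intros Hp HT Hgh [J1 J2] [K1 K2].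
  assert (forall r2, lower_sum X d (fun A => mu (fun x => A (T x))) h r2 -> r2 <= 1 - I1).
  { intros r2 [m [b [B [H1 [H2 [H3 [H4 ->]]]]]]].
    assert (HB : part d m (fun j x => B j (T x))) by (apply part_pre; auto; split; auto).
    assert (I1 <= 1 - finsum m (fun i => b i * mu (fun x => B i (T x)))).
    { apply J2. intros r [n [a [A [G1 [G2 [G3 [G4 ->]]]]]]].
      rewrite <- (mu_total d mu m _ Hp HB). rewrite <- finsum_minus.
      rewrite (finsum_ext m _ (fun j => (1 - b j) * mu (fun x => B j (T x)))) by (intros; ring).
      apply (Cmp d mu n A a m _ _ Hp); auto. split; auto.
      intros i j x Hi Hj Ha Hb. specialize (G4 i x Hi Ha). specialize (H4 j (T x) Hj Hb). specialize (Hgh x). lra. }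
    lra. }
  assert (I2 <= 1 - I1) by (apply K2; auto). lra. Qed.

End I.

Lemma comp_push {X : Type} (f : nat -> X -> X) (n : nat) (mu : (X -> Prop) -> R) :
  Defs.comp (fun k : nat => push (f k)) n mu = fun A => mu (fun x => A (Defs.comp f n x)).
Proof. induction n; simpl. reflexivity. unfold push at 1. rewrite IHn. reflexivity. Qed.

Lemma comp_cont {X : Type} (d : X -> X -> R) (f : nat -> X -> X) (n : nat) :
  (forall n, (1 <= n)%nat -> mcontinuous X d (f n)) -> mcontinuous X d (Defs.comp f n).
Proof. intros Hf. induction n; simpl.
  intros x e He. exists e; split; auto.
  intros x e He. destruct (Hf (S n) ltac:(lia) (Defs.comp f n x) e He) as [d1 [Hd1 H1]].
  destruct (IHn x d1 Hd1) as [d2 [Hd2 H2]]. exists d2. split; auto. Qed.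

Lemma floor_ex N t : 0 <= t < INR N -> exists j, (j < N)%nat /\ INR j <= t < INR j + 1.
Proof. induction N; intros Ht. simpl in Ht. lra. rewrite S_INR in Ht.
  destruct (Rlt_or_le t (INR N)). destruct IHN as [j [Hj H']]. lra. exists j. split; auto.
  exists N. split; auto. lra. Qed.

Lemma sum_list_ge l m : In m l -> INR m <= fold_right (fun m acc => INR m + acc) 0 l.
Proof. induction l; simpl. tauto. intros [->|H].
  assert (0 <= fold_right (fun m acc => INR m + acc) 0 l). { clear. induction l; simpl. lra. pose proof (pos_INR a). lra. } lra.
  pose proof (pos_INR a). specialize (IHl H). lra. Qed.

Section P.
Context {X : Type} (d : X -> X -> R).
Implicit Types (mu : (X -> Prop) -> R).

Lemma bounded g : mcompact X d -> rcontinuous X d g -> exists M, forall x, Rabs (g x) <= M.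
Proof. intros Hc Hg.
  destruct (Hc nat (fun m x => Rabs (g x) < INR m)) as [l Hl].
  - intros m x Hx. destruct (Hg x (INR m - Rabs (g x))) as [del [Hd H]]. lra. exists del. split; auto.
    intros y Hy. specialize (H y Hy). pose proof (Rabs_triang_inv (g x) (g y)).
    rewrite <- Rabs_Ropp in H. replace (- (g x - g y)) with (g y - g x) in H by ring.
    pose proof (Rabs_triang (g y - g x) (g x)). replace (g y - g x + g x) with (g y) in H1 by ring. lra.
  - intros x. destruct (INR_unbounded (Rabs (g x))) as [m Hm]. exists m. lra.
  - exists (fold_right (fun m acc => INR m + acc) 0 l). intros x. destruct (Hl x) as [i [Hi Hx]].
    pose proof (sum_list_ge l i Hi). lra. Qed.

Lemma level_part g M eta : rcontinuous X d g -> (forall x, Rabs (g x) <= M) -> 0 < eta ->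
  exists N B, part d N B /\ forall j x y, (j < N)%nat -> B j x -> B j y -> Rabs (g x - g y) <= eta.
Proof. intros Hg HM He. destruct (INR_unbounded (2 * M / eta)) as [N HN].
  exists N, (fun j x => -M + INR j * eta <= g x /\ g x < -M + (INR j + 1) * eta).
  split; [split; [|split]|].
  - intros i Hi. apply borel_and. apply (borel_ext d (fun x => ~ (g x < -M + INR i * eta))).
    apply borel_compl. apply borel_open. apply open_lt; auto. intros x. split; intros; lra.
    apply borel_open; apply open_lt; auto.
  - intros i j x Hi Hj Hij [H1 H2] [H3 H4].
    destruct (Nat.lt_total i j) as [Hl|[Hl|Hl]]; [|contradiction|].
    assert (INR i + 1 <= INR j) by (rewrite <- S_INR; apply le_INR; lia). nra.
    assert (INR j + 1 <= INR i) by (rewrite <- S_INR; apply le_INR; lia). nra.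
  - intros x. pose proof (HM x) as Hx. apply Rabs_le_inv in Hx.
    destruct (floor_ex N ((g x + M) / eta)) as [j [Hj Ht]].
    split. apply Rmult_le_pos. lra. left; apply Rinv_0_lt_compat; auto.
    apply Rle_lt_trans with (2 * M / eta); auto. unfold Rdiv. apply Rmult_le_compat_r. left; apply Rinv_0_lt_compat; auto. lra.
    exists j. split; auto. destruct Ht as [Ht1 Ht2].
    assert (E : (g x + M) / eta * eta = g x + M) by (field; lra).
    split. apply Rmult_le_compat_r with (r := eta) in Ht1; lra. apply Rmult_lt_compat_r with (r := eta) in Ht2; lra.
  - intros j x y Hj [H1 H2] [H3 H4]. apply Rabs_le. lra.
Qed.

Lemma refine N A N' B : part d N A -> part d N' B ->
  part d (N * N') (fun p x => A (p / N')%nat x /\ B (p mod N')%nat x).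
Proof. intros [A1 [A2 A3]] [B1 [B2 B3]].
  assert (F : forall p, (p < N * N')%nat -> (p / N' < N)%nat /\ (p mod N' < N')%nat).
  { intros p Hp. assert (N' <> 0%nat) by (intros ->; lia). split. apply Nat.Div0.div_lt_upper_bound. lia.
    apply Nat.mod_upper_bound; auto. }
  split; [|split].
  - intros p Hp. destruct (F p Hp). apply borel_and; auto.
  - intros p q x Hp Hq Hpq [H1 H2] [H3 H4]. destruct (F p Hp), (F q Hq).
    destruct (Nat.eq_dec (p / N') (q / N')) as [E1|E1].
    destruct (Nat.eq_dec (p mod N') (q mod N')) as [E2|E2].
    apply Hpq. rewrite (Nat.div_mod_eq p N'), (Nat.div_mod_eq q N'). rewrite E1, E2. auto.
    { eapply B2. 4: apply H2. all: eauto. }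
    { eapply A2. 4: apply H1. all: eauto. }
  - intros x. destruct (A3 x) as [i [Hi Hx]]. destruct (B3 x) as [j [Hj Hy]]. exists (i * N' + j)%nat.
    split. nia. rewrite <- (Nat.div_unique (i * N' + j) N' i j) by lia.
    rewrite <- (Nat.mod_unique (i * N' + j) N' i j) by lia. auto.
Qed.

Lemma multi_part k (gs : nat -> X -> R) eta : 0 < eta ->
  (forall i, (i < k)%nat -> rcontinuous X d (gs i)) ->
  (forall i, (i < k)%nat -> exists M, forall x, Rabs (gs i x) <= M) ->
  exists N A, part d N A /\ forall i j x y, (i < k)%nat -> (j < N)%nat -> A j x -> A j y -> Rabs (gs i x - gs i y) <= eta.
Proof. intros He. induction k; intros Hc Hb.
  - exists 1%nat, (fun _ _ => True). split. apply part1. intros; lia.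
  - destruct IHk as [N [A [HA HA']]]. intros; apply Hc; lia. intros; apply Hb; lia.
    destruct (Hb k ltac:(lia)) as [M HM]. destruct (level_part (gs k) M eta) as [N' [B [HB HB']]]; auto.
    exists (N * N')%nat, (fun p x => A (p / N')%nat x /\ B (p mod N')%nat x). split. apply refine; auto.
    intros i p x y Hi Hp [H1 H2] [H3 H4].
    assert (N' <> 0%nat) by (intros ->; lia).
    destruct (Nat.eq_dec i k) as [->|Hik]. apply (HB' (p mod N')%nat); auto. apply Nat.mod_upper_bound; auto.
    apply (HA' i (p / N')%nat); auto. lia. apply Nat.Div0.div_lt_upper_bound. lia.
Qed.

Lemma reps (x0 : X) (N : nat) (A : nat -> X -> Prop) : exists xs : nat -> X, forall j, (exists y, A j y) -> A j (xs j).
Proof. exists (fun j => match excluded_middle_informative (exists y, A j y) with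
   | left H => proj1_sig (constructive_indefinite_description _ H) | right _ => x0 end).
  intros j H. destruct (excluded_middle_informative (exists y, A j y)). apply proj2_sig. tauto. Qed.

Lemma prob_inhabited mu : is_prob X d mu -> exists x : X, True.
Proof. intros Hp. apply NNPP. intros Hn. pose proof Hp as [_ [E _]].
  rewrite (prob_ext mu (fun _ => True) (fun _ => False)), (prob_empty d) in E; auto. lra.
  intros x; split; auto. intros _. apply Hn. exists x; auto. Qed.

Lemma density mu k gs eta : is_prob X d mu -> 0 < eta ->
  (forall i, (i < k)%nat -> rcontinuous X d (gs i)) ->
  (forall i, (i < k)%nat -> exists M, forall x, Rabs (gs i x) <= M) ->
  exists N xs w, (forall j, (j < N)%nat -> 0 <= w j) /\ finsum N w = 1 /\
    forall i I, (i < k)%nat -> integral X d mu (gs i) I ->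
      Rabs (I - finsum N (fun j => w j * gs i (xs j))) <= eta.
Proof. intros Hp He Hc Hb. destruct (prob_inhabited mu Hp) as [x0 _].
  destruct (multi_part k gs eta He Hc Hb) as [N [A [HA HA']]].
  destruct (reps x0 N A) as [xs Hxs]. exists N, xs, (fun j => mu (A j)). split; [|split].
  - intros j Hj. apply (prob_nonneg d); auto. apply HA; auto.
  - apply (mu_total d mu N A Hp HA).
  - intros i I Hi HI. rewrite (finsum_ext N _ (fun j => gs i (xs j) * mu (A j))) by (intros; ring).
    apply (Core d mu (gs i) N A); auto. intros j y Hj Hy. apply (HA' i j); auto. apply Hxs. eauto.
Qed.

End P.

Definition Dm {X : Type} (K : nat) (w : nat -> R) (z : nat -> X) : (X -> Prop) -> R :=
  fun A => finsum K (fun k => w k * ind (A (z k))).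

Lemma ind_T (P : Prop) : P -> ind P = 1.
Proof. unfold ind. destruct (excluded_middle_informative P); tauto. Qed.
Lemma ind_F (P : Prop) : ~ P -> ind P = 0.
Proof. unfold ind. destruct (excluded_middle_informative P); tauto. Qed.
Lemma ind_01 (P : Prop) : 0 <= ind P <= 1.
Proof. unfold ind. destruct (excluded_middle_informative P); lra. Qed.

Lemma Rabs_tri3 a b c : Rabs (a - c) <= Rabs (a - b) + Rabs (b - c).
Proof. replace (a - c) with ((a - b) + (b - c)) by ring. apply Rabs_triang. Qed.

Lemma finsum_delta N h j0 : (j0 < N)%nat -> (forall j, (j < N)%nat -> j <> j0 -> h j = 0) -> finsum N h = h j0.
Proof. induction N; intros Hj H. lia. simpl. destruct (Nat.eq_dec j0 N) as [->|Hn].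
  rewrite finsum_zero. lra. intros; apply H; lia.
  rewrite IHN by (auto; lia). rewrite (H N) by lia. lra. Qed.

Lemma wavg_close K w a b eta : (forall k, (k < K)%nat -> 0 <= w k) -> finsum K w = 1 ->
  (forall k, (k < K)%nat -> Rabs (a k - b k) <= eta) ->
  Rabs (finsum K (fun k => w k * a k) - finsum K (fun k => w k * b k)) <= eta.
Proof. intros Hw H1 Hab. rewrite <- finsum_minus. eapply Rle_trans. apply finsum_abs.
  replace eta with (eta * finsum K w) by (rewrite H1; ring). rewrite <- finsum_scal.
  apply finsum_le. intros k Hk. replace (w k * a k - w k * b k) with (w k * (a k - b k)) by ring.
  rewrite Rabs_mult, (Rabs_pos_eq (w k)) by auto. rewrite Rmult_comm. apply Rmult_le_compat_r; auto. Qed.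

Lemma sum_finsum_swap K (F : nat -> nat -> R) N :
  sum_f_R0 (fun n => finsum K (F n)) N = finsum K (fun k => sum_f_R0 (fun n => F n k) N).
Proof. induction N; simpl. auto. rewrite IHN, <- finsum_plus. auto. Qed.

Lemma sum_scal c g N : sum_f_R0 (fun n => c * g n) N = c * sum_f_R0 g N.
Proof. induction N; simpl. auto. rewrite IHN. ring. Qed.

Lemma finite_max K (P : nat -> nat -> Prop) : (forall k, (k < K)%nat -> exists Nk, forall N, (Nk <= N)%nat -> P k N) ->
  exists N0, forall k N, (k < K)%nat -> (N0 <= N)%nat -> P k N.
Proof. induction K; intros H. exists O. intros; lia.
  destruct IHK as [N1 H1]. intros; apply H; lia. destruct (H K ltac:(lia)) as [N2 H2].
  exists (Nat.max N1 N2). intros k N Hk HN. destruct (Nat.eq_dec k K) as [->|Hn]. apply H2; lia. apply H1; lia. Qed.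

Section D.
Context {X : Type} (d : X -> X -> R).

Lemma ind_sum (A : nat -> X -> Prop) y n0 : A n0 y ->
  (forall m n x, m <> n -> A m x -> A n x -> False) ->
  forall N, sum_f_R0 (fun n => ind (A n y)) N = ind (n0 <= N)%nat.
Proof. intros H0 HD. induction N; simpl.
  destruct (Nat.eq_dec n0 0) as [->|Hn]. rewrite !ind_T; auto.
  rewrite !ind_F; auto. lia. intros H; eapply HD; [|apply H|apply H0]; auto.
  rewrite IHN. destruct (Nat.lt_total n0 (S N)) as [Hl|[Hl|Hl]].
  rewrite (ind_T (n0 <= N)%nat), ind_F, ind_T by (lia || (intros H; eapply HD; [|apply H|apply H0]; lia)). lra.
  subst. rewrite (ind_F (S N <= N)%nat), ind_T, ind_T by (auto || lia). lra.
  rewrite (ind_F (n0 <= N)%nat), ind_F, ind_F by (lia || (intros H; eapply HD; [|apply H|apply H0]; lia)). lra.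
Qed.

Lemma Dm_prob K w z : (forall k, (k < K)%nat -> 0 <= w k) -> finsum K w = 1 -> is_prob X d (Dm K w z).
Proof. intros Hw H1. split; [|split].
  - intros A _. apply finsum_nonneg. intros k Hk. pose proof (ind_01 (A (z k))). specialize (Hw k Hk). nra.
  - unfold Dm. rewrite <- H1. apply finsum_ext. intros. rewrite ind_T; auto. ring.
  - intros A _ HD. unfold Dm.
    assert (HK : forall k, (k < K)%nat -> exists Nk, forall N, (Nk <= N)%nat ->
       sum_f_R0 (fun n => ind (A n (z k))) N = ind (exists n, A n (z k))).
    { intros k Hk. destruct (classic (exists n, A n (z k))) as [[n0 Hn0]|Hn].
      exists n0. intros N HN. rewrite (ind_sum A (z k) n0); auto. rewrite !ind_T; eauto.
      exists O. intros N _. rewrite ind_F; auto. induction N; simpl. rewrite ind_F; eauto.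
      rewrite IHN, ind_F; eauto. lra. }
    destruct (finite_max K _ HK) as [N0 HN0].
    intros e He. exists N0. intros N HN. unfold R_dist. rewrite sum_finsum_swap.
    rewrite (finsum_ext K _ (fun k => w k * ind (exists n, A n (z k)))).
    rewrite Rminus_diag, Rabs_R0. auto.
    intros k Hk. rewrite sum_scal. rewrite HN0; auto.
Qed.

Lemma part_ind N B y c v eta : part d N B -> (forall j, (j < N)%nat -> B j y -> Rabs (c j - v) <= eta) ->
  Rabs (finsum N (fun j => c j * ind (B j y)) - v) <= eta.
Proof. intros [_ [HD HC]] H. destruct (HC y) as [j0 [Hj0 Hy]].
  rewrite (finsum_delta N _ j0); auto. rewrite ind_T; auto. rewrite Rmult_1_r. auto.
  intros j Hj Hn. rewrite ind_F. ring. intros Hb. eapply HD; [| | apply Hn | apply Hb | apply Hy]; auto. Qed.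

Lemma Dm_int K w z g M : (forall k, (k < K)%nat -> 0 <= w k) -> finsum K w = 1 ->
  rcontinuous X d g -> (forall x, Rabs (g x) <= M) ->
  forall I, integral X d (Dm K w z) g I -> I = finsum K (fun k => w k * g (z k)).
Proof. intros Hw H1 Hg HM I HI. pose proof (Dm_prob K w z Hw H1) as Hp.
  destruct (prob_inhabited d _ Hp) as [x0 _].
  assert (forall eta, 0 < eta -> Rabs (I - finsum K (fun k => w k * g (z k))) <= 2 * eta).
  { intros eta He. destruct (level_part d g M eta Hg HM He) as [N [B [HB HB']]].
    destruct (reps d x0 N B) as [xs Hxs].
    pose proof (Core d (Dm K w z) g N B (fun j => g (xs j)) eta Hp HB) as C.
    assert (C' : Rabs (I - finsum N (fun j => g (xs j) * Dm K w z (B j))) <= eta).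
    { apply C; auto. intros j y Hj Hy. apply (HB' j); auto. apply Hxs; eauto. }
    assert (E : finsum N (fun j => g (xs j) * Dm K w z (B j)) = finsum K (fun k => w k * finsum N (fun j => g (xs j) * ind (B j (z k))))).
    { unfold Dm. rewrite (finsum_ext N _ (fun j => finsum K (fun k => w k * (g (xs j) * ind (B j (z k)))))).
      rewrite finsum_swap. apply finsum_ext. intros. rewrite <- finsum_scal. auto.
      intros. rewrite <- finsum_scal. apply finsum_ext. intros; ring. }
    assert (W : Rabs (finsum K (fun k => w k * finsum N (fun j => g (xs j) * ind (B j (z k)))) - finsum K (fun k => w k * g (z k))) <= eta).
    { apply wavg_close; auto. intros k Hk. apply part_ind; auto. intros j Hj Hb. rewrite <- Rabs_Ropp. replace (- (g (xs j) - g (z k))) with (g (z k) - g (xs j)) by ring. apply (HB' j); auto. apply Hxs; eauto. }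
    rewrite E in C'. pose proof (Rabs_tri3 I (finsum K (fun k => w k * finsum N (fun j => g (xs j) * ind (B j (z k))))) (finsum K (fun k => w k * g (z k)))). lra. }
  apply NNPP. intros Hn. set (e := Rabs (I - finsum K (fun k => w k * g (z k)))) in *.
  assert (0 < e) by (apply Rabs_pos_lt; intros E; apply Hn; lra).
  specialize (H (e / 4) ltac:(lra)). lra. Qed.

End D.

Lemma fin_radius L (Q : nat -> R -> Prop) : (forall m r r', Q m r -> 0 < r' <= r -> Q m r') ->
  (forall m, (m < L)%nat -> exists r, 0 < r /\ Q m r) -> exists r, 0 < r /\ forall m, (m < L)%nat -> Q m r.
Proof. intros Hd. induction L; intros H. exists 1. split. lra. intros; lia.
  destruct IHL as [r1 [Hr1 H1]]. intros; apply H; lia. destruct (H L ltac:(lia)) as [r2 [Hr2 H2]].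
  exists (Rmin r1 r2). split. apply Rmin_glb_lt; auto. intros m Hm. destruct (Nat.eq_dec m L) as [->|Hn].
  apply (Hd L r2); auto. split. apply Rmin_glb_lt; auto. apply Rmin_r.
  apply (Hd m r1); auto. apply H1; lia. split. apply Rmin_glb_lt; auto. apply Rmin_l. Qed.

Section A.
Context {X : Type} (d : X -> X -> R).

Definition approx_data (U : ((X -> Prop) -> R) -> Prop) N (x : nat -> X) w r : Prop :=
  (forall j, (j < N)%nat -> 0 <= w j) /\ finsum N w = 1 /\ 0 < r /\
  forall K w' z (pi : nat -> nat), (forall k, (k < K)%nat -> 0 <= w' k) ->
    (forall k, (k < K)%nat -> (pi k < N)%nat /\ d (x (pi k)) (z k) < r) ->
    (forall F : nat -> R, finsum K (fun k => w' k * F (pi k)) = finsum N (fun j => w j * F j)) ->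
    U (Dm K w' z).

Lemma approx U mu : mcompact X d -> weak_open X d U -> U mu -> exists N x w r, approx_data U N x w r.
Proof. intros Hc [HU1 HU2] Hmu. destruct (HU2 mu Hmu) as [eps [He [k [gs [Hgs Hnb]]]]].
  assert (Hb : forall i, (i < k)%nat -> exists M, forall x, Rabs (gs i x) <= M).
  { intros i Hi. apply (bounded d); auto. }
  destruct (density d mu k gs (eps / 4) (HU1 mu Hmu) ltac:(lra) Hgs Hb) as [N [xs [w [Hw [Hs Hd]]]]].
  destruct (fin_radius k (fun i r => forall j y, (j < N)%nat -> d (xs j) y < r -> Rabs (gs i (xs j) - gs i y) < eps / 4)) as [r [Hr HR]].
  { intros m r r' H [H1 H2] j y Hj Hy. apply H; auto. lra. }
  { intros i Hi. destruct (fin_radius N (fun j r => forall y, d (xs j) y < r -> Rabs (gs i (xs j) - gs i y) < eps / 4)) as [r [Hr H]].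
    intros m r0 r' H [H1 H2] y Hy. apply H. lra.
    intros j Hj. destruct (Hgs i Hi (xs j) (eps / 4)) as [del [Hdel H]]. lra. exists del; auto.
    exists r. split; auto. }
  exists N, xs, w, r. split; [auto|split; [auto|split; [auto|]]].
  intros K w' z pi Hw' Hpi HF.
  assert (H1 : finsum K w' = 1).
  { rewrite <- Hs. specialize (HF (fun _ => 1)). rewrite (finsum_ext K w' (fun k => w' k * 1)) by (intros; ring).
    rewrite HF. apply finsum_ext; intros; ring. }
  pose proof (Dm_prob d K w' z Hw' H1) as Hp.
  apply (Hnb _ Hp). intros i Hi Inu Imu Hnu Hmu'.
  destruct (Hb i Hi) as [M HM].
  rewrite (Dm_int d K w' z (gs i) M Hw' H1 (Hgs i Hi) HM Inu Hnu).
  specialize (Hd i Imu Hi Hmu').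
  assert (W : Rabs (finsum K (fun k => w' k * gs i (z k)) - finsum K (fun k => w' k * gs i (xs (pi k)))) <= eps / 4).
  { apply wavg_close; auto. intros kk Hk. destruct (Hpi kk Hk) as [Hp1 Hp2]. rewrite <- Rabs_Ropp.
    replace (- (gs i (z kk) - gs i (xs (pi kk)))) with (gs i (xs (pi kk)) - gs i (z kk)) by ring.
    left. apply HR; auto. }
  rewrite (HF (fun j => gs i (xs j))) in W.
  pose proof (Rabs_tri3 (finsum K (fun k0 => w' k0 * gs i (z k0))) (finsum N (fun j => w j * gs i (xs j))) Imu).
  rewrite <- Rabs_Ropp in Hd. replace (- (Imu - finsum N (fun j => w j * gs i (xs j)))) with (finsum N (fun j => w j * gs i (xs j)) - Imu) in Hd by ring.
  lra.
Qed.

End A.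

Section W.
Context {X : Type} (d : X -> X -> R) (f : nat -> X -> X).
Hypothesis Hm : is_metric X d.
Hypothesis Hf : forall n, (1 <= n)%nat -> mcontinuous X d (f n).
Hypothesis Hcomm : forall i j x, (1 <= i)%nat -> (1 <= j)%nat -> f i (f j x) = f j (f i x).

Lemma comm1 i k x : (1 <= i)%nat -> f i (Defs.comp f k x) = Defs.comp f k (f i x).
Proof. intros Hi. induction k; simpl. auto. rewrite Hcomm by lia. rewrite IHk. auto. Qed.

Lemma comm n k x : Defs.comp f n (Defs.comp f k x) = Defs.comp f k (Defs.comp f n x).
Proof. induction n; simpl. auto. rewrite IHn. rewrite comm1 by lia. auto. Qed.

Lemma open_pre T (A : X -> Prop) : mcontinuous X d T -> mopen X d A -> mopen X d (fun x => A (T x)).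
Proof. intros HT HA x Hx. destruct (HA (T x) Hx) as [e [He H]]. destruct (HT x e He) as [del [Hd H']].
  exists del. split; auto. Qed.

Lemma open_and (A B : X -> Prop) : mopen X d A -> mopen X d B -> mopen X d (fun x => A x /\ B x).
Proof. intros HA HB x [Ha Hb]. destruct (HA x Ha) as [e1 [He1 H1]]. destruct (HB x Hb) as [e2 [He2 H2]].
  exists (Rmin e1 e2). split. apply Rmin_glb_lt; auto. intros y Hy.
  pose proof (Rmin_l e1 e2). pose proof (Rmin_r e1 e2). split; [apply H1|apply H2]; lra. Qed.

Lemma open_ball c r : mopen X d (fun y => d c y < r).
Proof. intros x Hx. exists (r - d c x). split. lra. intros y Hy. destruct Hm as [_ [_ [_ Ht]]].
  specialize (Ht c x y). lra. Qed.

Lemma ball_center c r : 0 < r -> d c c < r.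
Proof. destruct Hm as [_ [H _]]. rewrite (proj2 (H c c) eq_refl). auto. Qed.

Definition goodpair (p : (X -> Prop) * (X -> Prop)) : Prop :=
  mopen X d (fst p) /\ mopen X d (snd p) /\ (exists x, fst p x) /\ (exists y, snd p y).

Lemma WM_list : weak_mixing (mopen X d) f -> forall N (l : list ((X -> Prop) * (X -> Prop))),
  (length l <= N)%nat -> (forall p, In p l -> goodpair p) ->
  exists n, (1 <= n)%nat /\ forall p, In p l -> exists x, fst p x /\ snd p (Defs.comp f n x).
Proof. intros HW N. induction N; intros l Hl Hg.
  - destruct l; simpl in Hl; [|lia]. exists 1%nat. split; auto. intros p [].
  - destruct l as [|p1 [|p2 rest]].
    + exists 1%nat. split; auto. intros p [].
    + destruct (Hg p1 (or_introl eq_refl)) as [A1 [A2 [A3 A4]]].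
      destruct (HW (fst p1) (fst p1) (snd p1) (snd p1) A1 A1 A2 A2 A3 A3 A4 A4) as [n [Hn [H1 _]]].
      exists n. split; auto. intros p [<-|[]]. auto.
    + destruct (Hg p1 (or_introl eq_refl)) as [A1 [A2 [A3 A4]]].
      destruct (Hg p2 (or_intror (or_introl eq_refl))) as [B1 [B2 [B3 B4]]].
      destruct (HW (fst p1) (snd p1) (fst p2) (snd p2) A1 A2 B1 B2 A3 A4 B3 B4) as [k [Hk [[a [Ha1 Ha2]] [b [Hb1 Hb2]]]]].
      set (q := (fun x => fst p1 x /\ fst p2 (Defs.comp f k x), fun y => snd p1 y /\ snd p2 (Defs.comp f k y))).
      destruct (IHN (q :: rest)) as [n [Hn H]].
      * simpl in *. lia.
      * intros p [<-|Hp]. unfold q, goodpair; simpl. repeat split.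
        apply open_and; auto. apply open_pre; auto. apply comp_cont; auto.
        apply open_and; auto. apply open_pre; auto. apply comp_cont; auto.
        exists a; auto. exists b; auto.
        apply Hg. simpl; auto.
      * exists n. split; auto. intros p [<-|[<-|Hp]].
        -- destruct (H q (or_introl eq_refl)) as [x [[H1 H2] [H3 H4]]]. eauto.
        -- destruct (H q (or_introl eq_refl)) as [x [[H1 H2] [H3 H4]]]. exists (Defs.comp f k x). split; auto.
           rewrite comm. auto.
        -- apply H. simpl; auto.
Qed.

Lemma pick2 (x0 : X) N M (P : nat -> nat -> X -> Prop) :
  (forall j l, (j < N)%nat -> (l < M)%nat -> exists z, P j l z) ->
  exists Z : nat -> nat -> X, forall j l, (j < N)%nat -> (l < M)%nat -> P j l (Z j l).
Proof. intros H. exists (fun j l => match excluded_middle_informative (exists z, P j l z) with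
   | left H => proj1_sig (constructive_indefinite_description _ H) | right _ => x0 end).
  intros j l Hj Hl. destruct (excluded_middle_informative (exists z, P j l z)). apply proj2_sig.
  exfalso; eauto. Qed.

Lemma pos_of_sum N w : finsum N w = 1 -> (0 < N)%nat.
Proof. destruct N; simpl; intros; lra || lia. Qed.

Lemma block U V N x w r M y v s rho n Z :
  approx_data d U N x w r -> approx_data d V M y v s -> rho <= r -> rho <= s ->
  (forall j l, (j < N)%nat -> (l < M)%nat -> d (x j) (Z j l) < rho /\ d (y l) (Defs.comp f n (Z j l)) < rho) ->
  exists mu, U mu /\ V (Defs.comp (fun k => push (f k)) n mu).
Proof. intros [Hw [Hs [Hr HU]]] [Hv [Hs' [Hr' HV]]] H1 H2 HZ.
  pose proof (pos_of_sum M v Hs') as HM0.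
  exists (Dm (N * M) (fun k => w (k / M)%nat * v (k mod M)%nat) (fun k => Z (k / M)%nat (k mod M)%nat)).
  assert (Hd : forall k, (k < N * M)%nat -> (k / M < N)%nat /\ (k mod M < M)%nat).
  { intros k Hk. split. apply Nat.Div0.div_lt_upper_bound. lia. apply Nat.mod_upper_bound. lia. }
  assert (Hnn : forall k, (k < N * M)%nat -> 0 <= w (k / M)%nat * v (k mod M)%nat).
  { intros k Hk. destruct (Hd k Hk). apply Rmult_le_pos; auto. }
  split.
  - apply (HU _ _ _ (fun k => (k / M)%nat)); auto.
    + intros k Hk. destruct (Hd k Hk). split; auto. destruct (HZ _ _ H H0). lra.
    + intros F. rewrite (finsum_prod N M (fun j l => w j * v l * F j)) by auto.
      apply finsum_ext. intros j Hj. rewrite (finsum_ext M _ (fun l => (w j * F j) * v l)) by (intros; ring).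
      rewrite finsum_scal, Hs'. ring.
  - rewrite comp_push.
    change (V (Dm (N * M) (fun k => w (k / M)%nat * v (k mod M)%nat) (fun k => Defs.comp f n (Z (k / M)%nat (k mod M)%nat)))).
    apply (HV _ _ _ (fun k => (k mod M)%nat)); auto.
    + intros k Hk. destruct (Hd k Hk). split; auto. destruct (HZ _ _ H H0). lra.
    + intros F. rewrite (finsum_prod N M (fun j l => w j * v l * F l)) by auto.
      rewrite finsum_swap. apply finsum_ext. intros l Hl. rewrite (finsum_ext N _ (fun j => (v l * F l) * w j)) by (intros; ring).
      rewrite finsum_scal, Hs. ring.
Qed.

End W.

Section M.
Context {X : Type} (d : X -> X -> R) (f : nat -> X -> X).
Hypothesis Hm : is_metric X d.
Hypothesis Hc : mcompact X d.
Hypothesis Hf : forall n, (1 <= n)%nat -> mcontinuous X d (f n).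
Hypothesis Hcomm : forall i j x, (1 <= i)%nat -> (1 <= j)%nat -> f i (f j x) = f j (f i x).

Definition ballL rho (L : nat -> X) N (R' : nat -> X) M : list ((X -> Prop) * (X -> Prop)) :=
  flat_map (fun j => map (fun l => ((fun y => d (L j) y < rho), (fun y => d (R' l) y < rho))) (seq 0 M)) (seq 0 N).

Lemma ballL_in rho L N R' M p : In p (ballL rho L N R' M) -> exists a b, p = ((fun y => d a y < rho), (fun y => d b y < rho)).
Proof. unfold ballL. rewrite in_flat_map. intros [j [_ H]]. rewrite in_map_iff in H. destruct H as [l [<- _]]. eauto. Qed.

Lemma ballL_mem rho L N R' M j l : (j < N)%nat -> (l < M)%nat ->
  In ((fun y => d (L j) y < rho), (fun y => d (R' l) y < rho)) (ballL rho L N R' M).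
Proof. intros Hj Hl. unfold ballL. rewrite in_flat_map. exists j. split. apply in_seq. lia.
  apply in_map_iff. exists l. split; auto. apply in_seq; lia. Qed.

Theorem WM12 : weak_mixing (mopen X d) f -> weak_mixing (weak_open X d) (fun n => push (f n)).
Proof. intros HW U1 U2 V1 V2 HU1 HU2 HV1 HV2 [m1 Hm1] [m2 Hm2] [n1 Hn1] [n2 Hn2].
  destruct (approx d U1 m1 Hc HU1 Hm1) as [N1 [x1 [w1 [r1 A1]]]].
  destruct (approx d U2 m2 Hc HU2 Hm2) as [N2 [x2 [w2 [r2 A2]]]].
  destruct (approx d V1 n1 Hc HV1 Hn1) as [M1 [y1 [v1 [s1 B1]]]].
  destruct (approx d V2 n2 Hc HV2 Hn2) as [M2 [y2 [v2 [s2 B2]]]].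
  pose proof A1 as [_ [_ [Hr1 _]]]. pose proof A2 as [_ [_ [Hr2 _]]].
  pose proof B1 as [_ [_ [Hs1 _]]]. pose proof B2 as [_ [_ [Hs2 _]]].
  set (rho := Rmin (Rmin r1 s1) (Rmin r2 s2)).
  assert (Hrho : 0 < rho) by (repeat apply Rmin_glb_lt; auto).
  assert (R1 : rho <= r1) by (unfold rho; eapply Rle_trans; [apply Rmin_l|apply Rmin_l]).
  assert (R2 : rho <= s1) by (unfold rho; eapply Rle_trans; [apply Rmin_l|apply Rmin_r]).
  assert (R3 : rho <= r2) by (unfold rho; eapply Rle_trans; [apply Rmin_r|apply Rmin_l]).
  assert (R4 : rho <= s2) by (unfold rho; eapply Rle_trans; [apply Rmin_r|apply Rmin_r]).
  set (L := ballL rho x1 N1 y1 M1 ++ ballL rho x2 N2 y2 M2).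
  destruct (WM_list d f Hf Hcomm HW (length L) L (le_n _)) as [n [Hn H]].
  { intros p Hp. apply in_app_or in Hp. destruct Hp as [Hp|Hp]; apply ballL_in in Hp; destruct Hp as [a [b ->]];
    repeat split; simpl; try apply open_ball; auto; [exists a|exists b|exists a|exists b]; apply ball_center; auto. }
  destruct (prob_inhabited d m1) as [x0 _]. destruct HU1 as [HH _]. auto.
  destruct (pick2 x0 N1 M1 (fun j l z => d (x1 j) z < rho /\ d (y1 l) (Defs.comp f n z) < rho)) as [Z1 HZ1].
  { intros j l Hj Hl. apply (H _ (in_or_app _ _ _ (or_introl (ballL_mem rho x1 N1 y1 M1 j l Hj Hl)))). }
  destruct (pick2 x0 N2 M2 (fun j l z => d (x2 j) z < rho /\ d (y2 l) (Defs.comp f n z) < rho)) as [Z2 HZ2].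
  { intros j l Hj Hl. apply (H _ (in_or_app _ _ _ (or_intror (ballL_mem rho x2 N2 y2 M2 j l Hj Hl)))). }
  exists n. split; auto. split.
  - apply (block d f U1 V1 N1 x1 w1 r1 M1 y1 v1 s1 rho n Z1); auto.
  - apply (block d f U2 V2 N2 x2 w2 r2 M2 y2 v2 s2 rho n Z2); auto.
Qed.

End M.

Lemma Rmax0_lip a b : Rabs (Rmax 0 a - Rmax 0 b) <= Rabs (a - b).
Proof. unfold Rmax. destruct (Rle_dec 0 a), (Rle_dec 0 b); unfold Rabs;
  repeat match goal with |- context [Rcase_abs ?x] => destruct (Rcase_abs x) end; lra. Qed.

Section T.
Context {X : Type} (d : X -> X -> R) (f : nat -> X -> X).
Hypothesis Hm : is_metric X d.
Hypothesis Hf : forall n, (1 <= n)%nat -> mcontinuous X d (f n).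
Hypothesis Hcomm : forall i j x, (1 <= i)%nat -> (1 <= j)%nat -> f i (f j x) = f j (f i x).

Definition bump c rho : X -> R := fun x => Rmax 0 (1 - d c x / rho).

Lemma bump_01 c rho x : 0 < rho -> 0 <= bump c rho x <= 1.
Proof. intros Hr. unfold bump. destruct Hm as [Hd _]. specialize (Hd c x).
  assert (0 <= d c x / rho) by (apply Rmult_le_pos; auto; left; apply Rinv_0_lt_compat; auto).
  unfold Rmax. destruct (Rle_dec 0 (1 - d c x / rho)); lra. Qed.

Lemma bump_abs c rho x : 0 < rho -> Rabs (bump c rho x) <= 1.
Proof. intros Hr. pose proof (bump_01 c rho x Hr). rewrite Rabs_pos_eq; lra. Qed.

Lemma bump_c c rho : 0 < rho -> bump c rho c = 1.
Proof. intros Hr. unfold bump. destruct Hm as [_ [H _]]. rewrite (proj2 (H c c) eq_refl).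
  unfold Rdiv. rewrite Rmult_0_l, Rminus_0_r. unfold Rmax. destruct (Rle_dec 0 1); lra. Qed.

Lemma bump_pos c rho x : 0 < rho -> 0 < bump c rho x -> d c x < rho.
Proof. intros Hr. unfold bump, Rmax. destruct (Rle_dec 0 (1 - d c x / rho)). intros H.
  assert (d c x / rho < 1) by lra. apply (Rmult_lt_compat_r rho) in H0; auto.
  unfold Rdiv in H0. rewrite Rmult_assoc, Rinv_l, Rmult_1_r, Rmult_1_l in H0; lra. lra. Qed.

Lemma bump_cont c rho : 0 < rho -> rcontinuous X d (bump c rho).
Proof. intros Hr x e He. exists (e * rho). split. apply Rmult_lt_0_compat; auto.
  intros y Hy. unfold bump. eapply Rle_lt_trans. apply Rmax0_lip.
  replace (1 - d c x / rho - (1 - d c y / rho)) with ((d c y - d c x) / rho) by (field; lra).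
  unfold Rdiv. rewrite Rabs_mult, (Rabs_pos_eq (/ rho)) by (left; apply Rinv_0_lt_compat; auto).
  destruct Hm as [_ [_ [Hs Ht]]]. assert (Rabs (d c y - d c x) <= d x y).
  { apply Rabs_le. pose proof (Ht c x y). pose proof (Ht c y x). rewrite (Hs y x) in H0. lra. }
  apply (Rmult_lt_reg_r rho); auto. rewrite Rmult_assoc, Rinv_l, Rmult_1_r by lra. lra. Qed.

Lemma Dm1_int (a : X) g : rcontinuous X d g -> (forall x, Rabs (g x) <= 1) ->
  forall I, integral X d (Dm 1 (fun _ => 1) (fun _ => a)) g I -> I = g a.
Proof. intros Hg Hb I HI. rewrite (Dm_int d 1 (fun _ => 1) (fun _ => a) g 1) with (I := I); auto.
  simpl; ring. intros; lra. simpl; ring. Qed.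

Lemma Dm2_int (b c : X) g : rcontinuous X d g -> (forall x, Rabs (g x) <= 1) ->
  forall I, integral X d (Dm 2 (fun _ => 1/2) (fun k => if Nat.eqb k 0 then b else c)) g I -> I = (g b + g c) / 2.
Proof. intros Hg Hb I HI. rewrite (Dm_int d 2 (fun _ => 1/2) (fun k => if Nat.eqb k 0 then b else c) g 1) with (I := I); auto.
  simpl; field. intros; lra. simpl; field. Qed.

Lemma weak_open_half g c : rcontinuous X d g -> (forall x, Rabs (g x) <= 1) ->
  weak_open X d (fun mu => is_prob X d mu /\ forall I, integral X d mu g I -> c < I).
Proof. intros Hg Hb. split. intros mu [H _]; auto.
  intros mu [Hp H]. destruct (integral_exists d mu g 1 Hp Hb) as [Imu HI].
  specialize (H Imu HI). exists (Imu - c). split. lra. exists 1%nat, (fun _ => g). split. auto.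
  intros nu Hnu Hc. split; auto. intros I HI'. specialize (Hc O ltac:(lia) I Imu HI' HI).
  apply Rabs_lt_inv in Hc. lra. Qed.

Lemma weak_open_two g h c : rcontinuous X d g -> (forall x, Rabs (g x) <= 1) ->
  rcontinuous X d h -> (forall x, Rabs (h x) <= 1) ->
  weak_open X d (fun mu => is_prob X d mu /\ (forall I, integral X d mu g I -> c < I) /\ (forall I, integral X d mu h I -> c < I)).
Proof. intros Hg Hbg Hh Hbh. split. intros mu [H _]; auto.
  intros mu [Hp [H1 H2]]. destruct (integral_exists d mu g 1 Hp Hbg) as [I1 HI1].
  destruct (integral_exists d mu h 1 Hp Hbh) as [I2 HI2].
  specialize (H1 I1 HI1). specialize (H2 I2 HI2). exists (Rmin (I1 - c) (I2 - c)). split. apply Rmin_glb_lt; lra.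
  exists 2%nat, (fun i => if Nat.eqb i 0 then g else h). split. intros i Hi. destruct (Nat.eqb i 0); auto.
  intros nu Hnu Hc. pose proof (Rmin_l (I1 - c) (I2 - c)). pose proof (Rmin_r (I1 - c) (I2 - c)).
  split; auto. split.
  intros I HI. specialize (Hc O ltac:(lia) I I1 HI HI1). apply Rabs_lt_inv in Hc. lra.
  intros I HI. specialize (Hc 1%nat ltac:(lia) I I2 HI HI2). apply Rabs_lt_inv in Hc. lra. Qed.

Lemma open_ball_in (A : X -> Prop) a : mopen X d A -> A a -> exists rho, 0 < rho /\ forall y, d a y < rho -> A y.
Proof. intros H Ha. apply H; auto. Qed.

Lemma SS : top_transitive (weak_open X d) (fun n => push (f n)) ->
  forall A B C, mopen X d A -> mopen X d B -> mopen X d C -> (exists x, A x) -> (exists x, B x) -> (exists x, C x) ->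
  exists n, (1 <= n)%nat /\ (exists x, A x /\ B (Defs.comp f n x)) /\ (exists x, A x /\ C (Defs.comp f n x)).
Proof. intros HT A B C HA HB HC [a Ha] [b Hb] [c Hc].
  destruct (HA a Ha) as [ra [Hra HA']]. destruct (HB b Hb) as [rb [Hrb HB']]. destruct (HC c Hc) as [rc [Hrc HC']].
  set (gA := bump a ra). set (gB := bump b rb). set (gC := bump c rc).
  assert (cA : rcontinuous X d gA) by (apply bump_cont; auto).
  assert (cB : rcontinuous X d gB) by (apply bump_cont; auto).
  assert (cC : rcontinuous X d gC) by (apply bump_cont; auto).
  assert (bA : forall x, Rabs (gA x) <= 1) by (intros; apply bump_abs; auto).
  assert (bB : forall x, Rabs (gB x) <= 1) by (intros; apply bump_abs; auto).
  assert (bC : forall x, Rabs (gC x) <= 1) by (intros; apply bump_abs; auto).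
  destruct (HT _ _ (weak_open_half gA (2/3) cA bA) (weak_open_two gB gC (1/3) cB bB cC bC)) as [n [Hn [mu [[Hp HmuA] [Hp' [HmuB HmuC]]]]]].
  - exists (Dm 1 (fun _ => 1) (fun _ => a)). split. apply Dm_prob. intros; lra. simpl; lra.
    intros I HI. rewrite (Dm1_int a gA cA bA I HI). unfold gA. rewrite bump_c; auto. lra.
  - exists (Dm 2 (fun _ => 1/2) (fun k => if Nat.eqb k 0 then b else c)). split. apply Dm_prob. intros; lra. simpl; lra.
    split; intros I HI. rewrite (Dm2_int b c gB cB bB I HI). unfold gB. rewrite bump_c; auto.
    pose proof (bump_01 b rb c Hrb). lra.
    rewrite (Dm2_int b c gC cC bC I HI). unfold gC. rewrite bump_c; auto.
    pose proof (bump_01 c rc b Hrc). lra.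
  - rewrite comp_push in Hp', HmuB, HmuC.
    assert (HTc : mcontinuous X d (Defs.comp f n)) by (apply comp_cont; auto).
    destruct (integral_exists d mu gA 1 Hp bA) as [IA HIA]. specialize (HmuA IA HIA).
    exists n. split; auto. split; apply NNPP; intros Hno.
    + destruct (integral_exists d _ gB 1 Hp' bB) as [IB HIB]. specialize (HmuB IB HIB).
      assert (forall x, gA x + gB (Defs.comp f n x) <= 1).
      { intros x. pose proof (bump_01 a ra x Hra). pose proof (bump_01 b rb (Defs.comp f n x) Hrb). fold gA gB in H, H0.
        destruct (Rle_lt_dec (gA x) 0). lra. assert (A x) by (apply HA'; apply (bump_pos a ra); auto).
        destruct (Rle_lt_dec (gB (Defs.comp f n x)) 0). lra. exfalso. apply Hno. exists x. split; auto.
        apply HB'. apply (bump_pos b rb); auto. }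
      pose proof (sum_le1 d mu (Defs.comp f n) gA gB IA IB Hp HTc H HIA HIB). lra.
    + destruct (integral_exists d _ gC 1 Hp' bC) as [IC HIC]. specialize (HmuC IC HIC).
      assert (forall x, gA x + gC (Defs.comp f n x) <= 1).
      { intros x. pose proof (bump_01 a ra x Hra). pose proof (bump_01 c rc (Defs.comp f n x) Hrc). fold gA gC in H, H0.
        destruct (Rle_lt_dec (gA x) 0). lra. assert (A x) by (apply HA'; apply (bump_pos a ra); auto).
        destruct (Rle_lt_dec (gC (Defs.comp f n x)) 0). lra. exfalso. apply Hno. exists x. split; auto.
        apply HC'. apply (bump_pos c rc); auto. }
      pose proof (sum_le1 d mu (Defs.comp f n) gA gC IA IC Hp HTc H HIA HIC). lra.
Qed.

Theorem TT_WM : top_transitive (weak_open X d) (fun n => push (f n)) -> weak_mixing (mopen X d) f.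
Proof. intros HT U1 U2 V1 V2 HU1 HU2 HV1 HV2 HU1n HU2n HV1n HV2n.
  destruct (SS HT U1 U2 V2 HU1 HU2 HV2 HU1n HU2n HV2n) as [k [Hk [[x [Hx1 Hx2]] [x' [Hx1' Hx2']]]]].
  assert (HTk : mcontinuous X d (Defs.comp f k)) by (apply comp_cont; auto).
  destruct (SS HT (fun y => U1 y /\ U2 (Defs.comp f k y)) V1 (fun y => V2 (Defs.comp f k y))) as [n [Hn [[p [[Hp1 Hp2] Hp3]] [q [[Hq1 Hq2] Hq3]]]]].
  apply open_and; auto. apply open_pre; auto. auto. apply open_pre; auto. eauto. auto. eauto.
  exists n. split; auto. split. eauto. exists (Defs.comp f k q). split; auto. rewrite comm; auto.
Qed.

End T.

Theorem theorem3p5 (X : Type) (d : X -> X -> R) (f : nat -> X -> X) :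
  is_metric X d ->
  mcompact X d ->
  (forall n, (1 <= n)%nat -> mcontinuous X d (f n)) ->
  (forall i j x, (1 <= i)%nat -> (1 <= j)%nat -> f i (f j x) = f j (f i x)) ->
  (weak_mixing (mopen X d) f <->
     weak_mixing (weak_open X d) (fun n => push (f n))) /\
  (weak_mixing (weak_open X d) (fun n => push (f n)) <->
     top_transitive (weak_open X d) (fun n => push (f n))).
Proof. intros Hm Hc Hf Hcomm.
  assert (W23 : weak_mixing (weak_open X d) (fun n => push (f n)) -> top_transitive (weak_open X d) (fun n => push (f n))).
  { intros HW U V HU HV HUn HVn. destruct (HW U U V V HU HU HV HV HUn HUn HVn HVn) as [n [Hn [H _]]]. eauto. }
  pose proof (WM12 d f Hm Hc Hf Hcomm) as W12. pose proof (TT_WM d f Hm Hf Hcomm) as W31.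
  split; split; auto.
Qed.
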